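(* Let $u$ be a word, let $s$ be a nonempty factor of $u$, and let $w$ be the shortest element of $\mathrm{Nodes}(u)$ such that $s$ is a prefix of $w$. Then $s$ is a seed of $u$ if and only if $|s|\ge\Delta(w)$ and $s$ is a border seed of $u$.
   Context: For a factor $v$ of $u$, $\mathrm{Occ}(v,u)$ is the set of starting positions of occurrences of $v$ in $u$, $\mathit{first}(v)=\min\mathrm{Occ}(v,u)$, $\mathit{last}(v)=\max\mathrm{Occ}(v,u)$. For a finite set $X$ of integers, $\mathrm{maxgap}(X)$ is the maximum of $b-a$ over consecutive elements $a<b$ of $X$, or $0$ if $|X|\le1$; $\mathrm{maxgap}(v)=\mathrm{maxgap}(\mathrm{Occ}(v,u))$. $\mathrm{Nodes}(u)$ is the set of factors of $u$ corresponding to explicit nodes of the suffix tree of $u$ (the root, the branching nodes and the leaves). For $w\in\mathrm{Nodes}(u)$, $\Delta(w)=\max\{\mathrm{maxgap}(x): x \text{ a prefix of } w\}$. A word $s$ covers $y$ if every position of $y$ lies in some occurrence of $s$ in $y$. A seed of $u$ is a factor $s$ of $u$ such that $u$ is a factor of some word covered by $s$. Writing $u=w_1w_2w_3$ with $w_2=u[\mathit{first}(s)..\mathit{last}(s)+|s|-1]$, $s$ is a border seed of $u$ if $s$ is a seed of $w_1\,s\,w_3$. *)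

(* Defs.v *)
(* Words are sequences over an alphabet T : eqType;
   positions are 0-based (gaps are unaffected by the indexing base). *)
From mathcomp Require Import all_boot.
Set Implicit Arguments. Unset Strict Implicit. Unset Printing Implicit Defensive.

Section Words.
Variable T : eqType.

Definition factor (v u : seq T) : bool := infix v u.

Definition Occ (v u : seq T) : seq nat :=
  [seq i <- iota 0 (size u - size v).+1 | take (size v) (drop i u) == v].

Definition first (v u : seq T) : nat := head 0 (Occ v u).
Definition last_occ (v u : seq T) : nat := last 0 (Occ v u).

Definition maxgap (X : seq nat) : nat :=
  match X with
  | [::] => 0
  | x :: X' => \max_(p <- zip X X') (p.2 - p.1)
  end.

Definition maxgap_w (v u : seq T) : nat := maxgap (Occ v u).

Definition right_branching (v u : seq T) : Prop :=
  exists a b : T, a != b /\ factor (rcons v a) u /\ factor (rcons v b) u.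

Definition no_right_ext (v u : seq T) : Prop :=
  forall a : T, ~~ factor (rcons v a) u.

(* Nodes(u): explicit nodes of the suffix tree of u, i.e. the root (empty
   word), the branching nodes (right-branching factors), and the leaves
   (factors with no right extension). *)
Definition Nodes (u w : seq T) : Prop :=
  factor w u /\ (w = [::] \/ right_branching w u \/ no_right_ext w u).

Definition Delta (w u : seq T) : nat :=
  \max_(i < (size w).+1) maxgap_w (take i w) u.

Definition covers (s y : seq T) : Prop :=
  forall i, i < size y ->
    exists2 j, j \in Occ s y & j <= i < j + size s.

Definition seed (s u : seq T) : Prop :=
  factor s u /\ exists y : seq T, covers s y /\ factor u y.

(* s is a border seed of u: with u = w1 w2 w3 and
   w2 = u[first(s) .. last(s)+|s|-1], s is a seed of w1 s w3 *)
Definition border_seed (s u : seq T) : Prop :=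
  seed s (take (first s u) u ++ s ++ drop (last_occ s u + size s) u).

End Words.

(* Main.v *)
Require Import Defs.
From mathcomp Require Import all_boot zify.
Set Implicit Arguments. Unset Strict Implicit. Unset Printing Implicit Defensive.

Lemma mem_Occ (T : eqType) (v u : seq T) i :
  (i \in Occ v u) = (i + size v <= size u) && (take (size v) (drop i u) == v).
Proof.
rewrite /Occ mem_filter mem_iota add0n andbC.
apply/andP/andP => -[H1 H2]; split => //; last lia.
have : size (take (size v) (drop i u)) = size v by rewrite (eqP H2).
rewrite size_take size_drop; case: ifP; lia.
Qed.

Lemma take_cat_le (T : Type) k (a b : seq T) : k <= size a -> take k (a ++ b) = take k a.
Proof.
elim: a k => [|x a IH] k H; first by case: k H => [|k] //; rewrite take0.
by case: k H => [|k] H; rewrite ?take0 ?drop0 //= IH.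
Qed.

Lemma drop_cat_le (T : Type) k (a b : seq T) : k <= size a -> drop k (a ++ b) = drop k a ++ b.
Proof.
elim: a k => [|x a IH] k H; first by case: k H => [|k] //; rewrite !drop0.
by case: k H => [|k] H; rewrite ?drop0 //= IH.
Qed.

Lemma drop_addcat (T : Type) k (a b : seq T) : drop (size a + k) (a ++ b) = drop k b.
Proof. by rewrite addnC -drop_drop drop_size_cat. Qed.

Lemma win_cat_l (T : Type) (a b : seq T) i k : i + k <= size a ->
  take k (drop i (a ++ b)) = take k (drop i a).
Proof. move=> H; rewrite drop_cat_le ?take_cat_le // ?size_drop; lia. Qed.

Lemma occ_cat_l (T : eqType) (s a b : seq T) j : j \in Occ s a -> j \in Occ s (a ++ b).
Proof. rewrite !mem_Occ size_cat => /andP[H1 H2]; rewrite win_cat_l // H2 andbT; lia. Qed.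

Lemma occ_cat_r (T : eqType) (s a b : seq T) j : j \in Occ s b -> size a + j \in Occ s (a ++ b).
Proof. rewrite !mem_Occ size_cat drop_addcat => /andP[H1 ->]; rewrite andbT; lia. Qed.

Lemma occ_cat_l_inv (T : eqType) (s a b : seq T) j : j + size s <= size a -> j \in Occ s (a ++ b) -> j \in Occ s a.
Proof. move=> H; rewrite !mem_Occ win_cat_l // H; by case/andP. Qed.


Lemma maxgap_cons2 x x' X : maxgap (x :: x' :: X) = maxn (x' - x) (maxgap (x' :: X)).
Proof. by rewrite /maxgap /= big_cons. Qed.

Lemma maxgap1 x : maxgap [:: x] = 0.
Proof. by rewrite /maxgap /= big_nil. Qed.

Lemma maxgap_cat X Y : maxgap X <= maxgap (X ++ Y).
Proof.
elim: X => [|x X IH] //; case: X IH => [|x' X] IH; first by rewrite maxgap1.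
rewrite cat_cons !maxgap_cons2 -cat_cons; move: IH; lia.
Qed.

Lemma sorted_min x X : sorted ltn (x :: X) -> forall z, z \in X -> x < z.
Proof. move=> /= H; exact/allP/(order_path_min ltn_trans). Qed.

Lemma gap_cover X g : sorted ltn X -> maxgap X <= g -> forall i,
  (exists2 a, a \in X & a <= i) -> (exists2 b, b \in X & i < b + g) ->
  exists2 j, j \in X & j <= i < j + g.
Proof.
elim: X => [|x X IH] Hs Hg i [a Ha Hai] [b Hb Hib]; first by [].
have Hmin := sorted_min Hs.
case: (ltnP i x) => Hix.
  move: Ha; rewrite inE => /orP[/eqP Hax|HaX]; first lia.
  have := Hmin _ HaX; lia.
case: (ltnP i (x + g)) => Hixg; first by exists x; rewrite ?inE ?eqxx ?Hix.
have HbX : b \in X.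
  move: Hb; rewrite inE => /orP[/eqP Hbx|] //; lia.
clear a Ha Hai Hb.
case: X IH Hs Hg Hmin HbX => [|x' X] IH Hs Hg Hmin HbX; first by [].
rewrite maxgap_cons2 in Hg.
have [j Hj Hij] : exists2 j, j \in x' :: X & j <= i < j + g.
  apply: IH; first exact: (path_sorted Hs).
  - lia.
  - exists x'; rewrite ?inE ?eqxx //; lia.
  - by exists b.
by exists j; rewrite // inE Hj orbT.
Qed.

Lemma maxgap_le X g : sorted ltn X ->
  (forall a b, a \in X -> b \in X -> a < b -> exists2 c, c \in X & a < c <= a + g) ->
  maxgap X <= g.
Proof.
elim: X => [|x X IH] Hs H //; case: X IH Hs H => [|x' X] IH Hs H; first by rewrite maxgap1.
have Hmin := sorted_min Hs.
have Hmin' := sorted_min (path_sorted Hs).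
rewrite maxgap_cons2 geq_max; apply/andP; split.
  have Hxx' : x < x' by apply: Hmin; rewrite inE eqxx.
  have Hx'in : x' \in [:: x, x' & X] by rewrite !inE eqxx orbT.
  have [c Hc Hxc] := H x x' (mem_head _ _) Hx'in Hxx'.
  move: Hc; rewrite inE => /orP[/eqP Hcx|HcX]; first lia.
  move: HcX; rewrite inE => /orP[/eqP Hcx'|HcX]; first lia.
  have := Hmin' _ HcX; lia.
apply: IH; first exact: (path_sorted Hs).
move=> a b Ha Hb Hab.
have Ha' : a \in x :: x' :: X by rewrite inE Ha orbT.
have Hb' : b \in x :: x' :: X by rewrite inE Hb orbT.
have [c Hc Hac] := H a b Ha' Hb' Hab.
exists c => //.
move: Hc; rewrite inE => /orP[/eqP Hcx|//].
have := Hmin _ Ha; lia.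
Qed.

Lemma mem_Occ' (T : eqType) (v u : seq T) i : 0 < size v ->
  (i \in Occ v u) = (take (size v) (drop i u) == v).
Proof.
move=> Hv; rewrite mem_Occ; apply/andP/idP => [[]//|H]; split=> //.
have : size (take (size v) (drop i u)) = size v by rewrite (eqP H).
rewrite size_take_min size_drop; lia.
Qed.

Lemma sorted_Occ (T : eqType) (v u : seq T) : sorted ltn (Occ v u).
Proof. rewrite /Occ; apply: sorted_filter; [exact: ltn_trans | exact: iota_ltn_sorted]. Qed.

Lemma factor_Occ (T : eqType) (v u : seq T) : factor v u -> exists i, i \in Occ v u.
Proof.
case/infixP => a [b ->]; exists (size a).
rewrite mem_Occ !size_cat drop_size_cat // take_size_cat // eqxx; lia.
Qed.

Lemma Occ_factor (T : eqType) (v u : seq T) i : i \in Occ v u -> factor v u.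
Proof.
rewrite mem_Occ => /andP[H /eqP E]; apply/infixP.
exists (take i u), (drop (size v + i) u).
rewrite -drop_drop; have -> : v ++ drop (size v) (drop i u) = drop i u by rewrite -{1}E cat_take_drop.
by rewrite cat_take_drop.
Qed.

Lemma path_last x X i : path ltn x X -> i \in x :: X -> i <= last x X.
Proof.
elim: X x i => [|y X IH] x i /=; first by rewrite inE => _ /eqP ->.
case/andP=> Hxy Hp; rewrite inE => /orP[/eqP ->|Hi]; last exact: IH.
have := IH y y Hp (mem_head _ _); lia.
Qed.

Lemma first_last_Occ (T : eqType) (v u : seq T) : factor v u ->
  [/\ first v u \in Occ v u, last_occ v u \in Occ v u &
      forall i, i \in Occ v u -> first v u <= i <= last_occ v u].
Proof.
move=> /factor_Occ [i0 Hi0]; rewrite /first /last_occ.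
have Hs := sorted_Occ v u.
case: (Occ v u) Hi0 Hs => [|x X] //= Hi0 Hs; split.
- exact: mem_head.
- exact: mem_last.
- move=> i Hi; rewrite (path_last Hs Hi) andbT.
  move: Hi; rewrite inE => /orP[/eqP ->//|Hi].
  have := sorted_min Hs Hi; lia.
Qed.

Lemma occ_pre (T : eqType) (s y y' : seq T) m j : 0 < size s ->
  take m y = take m y' -> j + size s <= m -> j \in Occ s y -> j \in Occ s y'.
Proof.
move=> Hs E Hj; rewrite !mem_Occ' //.
have F : forall z : seq T, take (size s) (drop j z) = drop j (take (size s + j) (take m z)).
  by move=> z; rewrite take_drop take_takel //; lia.
by rewrite !F E.
Qed.

Lemma occ_suf (T : eqType) (s y y' : seq T) m m' k : 0 < size s ->
  drop m y = drop m' y' -> m + k \in Occ s y -> m' + k \in Occ s y'.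
Proof.
move=> Hs E; rewrite !mem_Occ' // ![_ + k]addnC -!drop_drop.
by rewrite E.
Qed.

Lemma cover_transfer (T : eqType) (s pre suf X1 X2 : seq T) :
  0 < size s ->
  covers s (pre ++ X1 ++ suf) ->
  take (size s) X1 = s -> drop (size X1 - size s) X1 = s -> size s <= size X1 ->
  take (size s) X2 = s -> drop (size X2 - size s) X2 = s -> size s <= size X2 ->
  (forall i, size pre <= i < size pre + size X2 ->
     exists2 j, j \in Occ s (pre ++ X2 ++ suf) & j <= i < j + size s) ->
  covers s (pre ++ X2 ++ suf).
Proof.
move=> Hs Hc T1 D1 S1 T2 D2 S2 Hmid.
set n := size s; set L := size pre.
have Tk : forall X, take n X = s -> size s <= size X ->
    take (L + n) (pre ++ X ++ suf) = pre ++ s.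
  move=> X TX SX; rewrite takeD take_size_cat // drop_size_cat //.
  by rewrite take_cat_le // TX.
have Dk : forall X, drop (size X - n) X = s -> size s <= size X ->
    drop (L + (size X - n)) (pre ++ X ++ suf) = s ++ suf.
  by move=> X DX SX; rewrite drop_addcat drop_cat_le ?DX //; lia.
have TE : take (L + n) (pre ++ X1 ++ suf) = take (L + n) (pre ++ X2 ++ suf).
  by rewrite !Tk.
have DE : drop (L + (size X1 - n)) (pre ++ X1 ++ suf) =
          drop (L + (size X2 - n)) (pre ++ X2 ++ suf).
  by rewrite !Dk.
move=> i; rewrite !size_cat => Hi.
case: (ltnP i L) => HiL.
  have [|j Hj Hji] := Hc i; first by rewrite !size_cat; lia.
  exists j => //; apply: occ_pre Hs TE _ Hj; lia.
case: (ltnP i (L + size X2)) => HiX.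
  by apply: Hmid; rewrite HiL HiX.
set k := i - (L + (size X2 - n)).
have [|j1 Hj1 Hji1] := Hc (L + (size X1 - n) + k); first by rewrite !size_cat; lia.
set k1 := j1 - (L + (size X1 - n)).
have Ej1 : j1 = L + (size X1 - n) + k1 by rewrite /k1; lia.
rewrite Ej1 in Hj1.
exists (L + (size X2 - n) + k1); last by move: Hji1; rewrite Ej1 /k /n; lia.
exact: occ_suf Hs DE Hj1.
Qed.

Lemma take_size_take (T : Type) (s : seq T) k : take (size (take k s)) s = take k s.
Proof. by rewrite size_take_min take_min take_size. Qed.

Lemma seed_gap (T : eqType) (s u : seq T) k : 0 < size s -> seed s u ->
  maxgap (Occ (take k s) u) <= size s.
Proof.
move=> Hs [_ [y [Hc /infixP [al [be Ey]]]]].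
set x := take k s; set n := size s; set p := size al.
have Hxn : size x <= n by rewrite /x size_take_min; lia.
apply: maxgap_le; first exact: sorted_Occ.
move=> a b Ha Hb Hab.
have Hb' := Hb; rewrite mem_Occ in Hb'; case/andP: Hb' => Hbu _.
have Hyu : size y = p + size u + size be by rewrite Ey !size_cat addnA.
case: (ltnP (p + a + n) (size y)) => Hy; last first.
  by exists b => //; rewrite Hab /=; lia.
have [q Hq Hqi] := Hc _ Hy.
case: (leqP (q - p) b) => Hqb; last by exists b => //; rewrite Hab /=; lia.
exists (q - p); last by lia.
rewrite mem_Occ; apply/andP; split; first lia.
have Eq : q = p + (q - p) by lia.
rewrite mem_Occ' // in Hq; move/eqP: Hq => Hq.
have : take (size x) (take n (drop q y)) = x by rewrite Hq /x take_size_take.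
rewrite take_takel //.
rewrite Eq Ey drop_addcat win_cat_l; last lia.
move=> E.
by rewrite addKn E.
Qed.

Lemma factor_size (T : eqType) (v u : seq T) : factor v u -> size v <= size u.
Proof. by case/infixP => a [b ->]; rewrite !size_cat; lia. Qed.

Lemma occ_ext (T : eqType) (u x : seq T) b : factor (rcons x b) u ->
  (forall c, factor (rcons x c) u -> c = b) ->
  exists Z, Occ x u = Occ (rcons x b) u ++ Z.
Proof.
move=> Hf Hu; have := factor_size Hf; rewrite size_rcons => Hsz.
set N := size u - size x.
have EN : (size u - size x).+1 = N + 1 by rewrite /N addn1.
rewrite /Occ size_rcons EN iotaD filter_cat.
have -> : (size u - (size x).+1).+1 = N by rewrite /N; lia.
eexists; congr (_ ++ _); apply: eq_in_filter => i; rewrite mem_iota add0n => /andP[_ Hi].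
have Hi' : size x < size (drop i u) by rewrite size_drop; lia.
rewrite (take_nth b) // eqseq_rcons.
case E : (take (size x) (drop i u) == x) => //=.
have Hx : take (size x) (drop i u) = x by apply/eqP.
have W : take (size x).+1 (drop i u) = rcons x (nth b (drop i u) (size x)).
  by rewrite (take_nth b) // Hx.
apply/esym/eqP/Hu; apply: (@Occ_factor _ _ _ i).
rewrite mem_Occ size_rcons W eqxx andbT; lia.
Qed.

Lemma occ_mid (T : eqType) (s a b : seq T) : size a \in Occ s (a ++ s ++ b).
Proof. by rewrite mem_Occ !size_cat drop_size_cat // take_size_cat // eqxx; apply/andP; split => //; lia. Qed.

Lemma delta_le (T : eqType) (u s w : seq T) :
  s != [::] -> Nodes u w -> prefix s w ->
  (forall w' : seq T, Nodes u w' -> prefix s w' -> size w <= size w') ->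
  seed s u -> Delta w u <= size s.
Proof.
case: s => [|a s0] // _; set s := a :: s0 => [[Hw _]] Hp Hmin Hseed.
have Hs : 0 < size s by [].
have Ps : take (size s) w = s by apply/eqP; rewrite -prefixE.
have Pk : forall k, k <= size s -> take k w = take k s.
  by move=> k Hk; rewrite -(@take_takel _ k (size s) w Hk) Ps.
have Hk : forall k, k <= size w -> maxgap (Occ (take k w) u) <= size s.
  elim => [|k IH] Hk; first by rewrite Pk // seed_gap.
  case: (leqP k.+1 (size s)) => H; first by rewrite Pk // seed_gap.
  apply: leq_trans (IH (ltnW Hk)).
  set x := take k w; set b := nth a w k.
  have Ex : take k.+1 w = rcons x b by rewrite (take_nth a).
  have Fx : forall j, factor (take j w) u.
    by move=> j; apply: infix_trans Hw; apply/prefixW/prefix_take.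
  have Hsx : prefix s x.
    by rewrite prefixE /x take_takel ?Ps //; lia.
  have Hu : forall c, factor (rcons x c) u -> c = b.
    move=> c Hc; case: (eqVneq c b) => // Hne.
    have Hn : Nodes u x.
      split; first exact: Fx.
      right; left; exists c, b; split => //; split => //; rewrite -Ex; exact: Fx.
    have := Hmin x Hn Hsx; rewrite /x size_take_min; lia.
  have Fxb : factor (rcons x b) u by rewrite -Ex; exact: Fx.
  have [Z EZ] := occ_ext Fxb Hu.
  by rewrite Ex EZ maxgap_cat.
by apply/bigmax_leqP => i _; apply: Hk; rewrite -ltnS ltn_ord.
Qed.

Theorem lemma4 (T : eqType) (u s w : seq T) :
  s != [::] -> factor s u ->
  Nodes u w -> prefix s w ->
  (forall w' : seq T, Nodes u w' -> prefix s w' -> size w <= size w') ->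
  (seed s u <-> (Delta w u <= size s /\ border_seed s u)).
Proof.
move=> Hne Hfs Hw Hp Hmin.
have Hs : 0 < size s by case: s Hne Hfs Hp Hmin.
have [Hf Hl Hfl] := first_last_Occ Hfs.
set f := first s u in Hf Hfl *; set l := last_occ s u in Hl Hfl *.
set n := size s in Hs *.
have Hfl' : f <= l by have := Hfl _ Hf; lia.
have Hfu := Hf; rewrite mem_Occ in Hfu; case/andP: Hfu => Hfu /eqP Wf.
have Hlu := Hl; rewrite mem_Occ in Hlu; case/andP: Hlu => Hlu /eqP Wl.
set w1 := take f u; set w3 := drop (l + n) u; set w2 := drop f (take (l + n) u).
have Eu : w1 ++ w2 ++ w3 = u.
  rewrite catA /w1 /w2 -{1}(@take_takel _ f (l + n) u) ?cat_take_drop //; lia.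
have Sw2 : size w2 = l + n - f by rewrite /w2 size_drop size_take_min; lia.
have T2 : take n w2 = s.
  by rewrite /w2 take_drop take_takel -?take_drop ?Wf //; lia.
have D2 : drop (size w2 - n) w2 = s.
  rewrite Sw2 /w2 drop_drop.
  have -> : l + n - f - n + f = l by lia.
  by rewrite -[l + n]addnC -take_drop Wl.
have S2 : n <= size w2 by lia.
have Hmg : maxgap (Occ s u) <= Delta w u.
  have Ps : take (size s) w = s by apply/eqP; rewrite -prefixE.
  have Hsw : size s < (size w).+1.
    by rewrite ltnS -Ps size_take_min geq_minr.
  rewrite /Delta /maxgap_w.
  have := @leq_bigmax _ (fun i : 'I_(size w).+1 => maxgap (Occ (take i w) u)) (Ordinal Hsw).
  by rewrite /= Ps.
split.
- move=> Hseed; split; first exact: delta_le.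
  case: (Hseed) => _ [y [Hc /infixP [al [be Ey]]]].
  rewrite /border_seed -/f -/l -/n -/w1 -/w3.
  split; first exact: infix_infix.
  exists (al ++ (w1 ++ s ++ w3) ++ be); split; last exact: infix_infix.
  have := @cover_transfer _ s (al ++ w1) (w3 ++ be) w2 s Hs.
  rewrite -!catA; apply => //.
  + by move: Hc; rewrite Ey -Eu -!catA.
  + by rewrite /n take_size.
  + by rewrite /n subnn drop0.
  + move=> i Hi; exists (size (al ++ w1)); last by rewrite -/n; lia.
    have := occ_mid s (al ++ w1) (w3 ++ be); by rewrite -!catA.
- case=> HD [_ [y' [Hc /infixP [al [be Ey]]]]].
  split => //; exists (al ++ u ++ be); split; last exact: infix_infix.
  move: Hc; rewrite Ey -/f -/l -/n -/w1 -/w3 => Hc.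
  rewrite -Eu.
  have := @cover_transfer _ s (al ++ w1) (w3 ++ be) s w2 Hs.
  rewrite -!catA; apply => //.
  + by move: Hc; rewrite -!catA.
  + by rewrite take_size.
  + by rewrite /n subnn drop0.
  + move=> i Hi.
    have Hgap : maxgap (Occ s u) <= n by apply: leq_trans HD.
    have Hi' := Hi; rewrite size_cat /w1 size_take_min in Hi'.
    have Ha : exists2 a, a \in Occ s u & a <= i - size al by exists f => //; lia.
    have Hb : exists2 b, b \in Occ s u & i - size al < b + n.
      by exists l => //; rewrite Sw2 in Hi'; lia.
    have [j0 Hj0 Hij0] := gap_cover (sorted_Occ s u) Hgap Ha Hb.
    exists (size al + j0); last by lia.
    have := occ_cat_r al (occ_cat_l be Hj0).
    by rewrite -Eu -!catA.
Qed.
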